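(* Let $B\in\mathbb{R}^{p\times n}$, $\lambda_1,\lambda_2>0$, $l\le 0\le u$ in $\mathbb{R}^n$, $\Omega=\{x: l\le x\le u\}$ and $g(x)=\lambda_1\|Bx\|_0+\lambda_2\|x\|_0+\delta_\Omega(x)$. Let $\Xi\subset\mathbb{R}^n$ be compact and $0<\underline{\mu}<\overline{\mu}$ be constants, and define $$\mathcal{Z}=\bigcup_{z\in\Xi,\ \mu\in[\underline\mu,\overline\mu]}\mathrm{prox}_{\mu^{-1}g}(z).$$ Then there exists $\nu>0$ (depending on $\Xi,\underline\mu,\overline\mu$) such that $\inf_{u\in\mathcal{Z}\setminus\{0\}}|[B;I]u|_{\min}\ge\nu$.
   Context: $\|y\|_0$ is the number of nonzero entries of $y$, $\mathrm{supp}(y)=\{i:y_i\ne0\}$, and $|y|_{\min}=\min_{i\in\mathrm{supp}(y)}|y_i|$. $\delta_\Omega$ is the indicator of $\Omega$. $[B;I]\in\mathbb{R}^{(p+n)\times n}$ is $B$ stacked on top of the $n\times n$ identity. For $\mu>0$, $\mathrm{prox}_{\mu g}(z)=\arg\min_x\{\frac{1}{2\mu}\|x-z\|^2+g(x)\}$. *)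

(* Defs.v *)
From HB Require Import structures.
From mathcomp Require Import all_boot all_order all_algebra.
From mathcomp Require Import all_classical all_reals all_analysis.
Set Implicit Arguments. Unset Strict Implicit. Unset Printing Implicit Defensive.
Import Order.TTheory GRing.Theory Num.Theory.
Import numFieldNormedType.Exports.
Local Open Scope classical_set_scope.
Local Open Scope ring_scope.

Definition l0norm (R : realType) (m : nat) (y : 'cV[R]_m) : nat :=
  #|[set i : 'I_m | y i 0 != 0]|.

Definition sqnorm (R : realType) (m : nat) (y : 'cV[R]_m) : R :=
  \sum_(i < m) (y i 0) ^+ 2.

Definition box (R : realType) (n : nat) (l u : 'cV[R]_n) : set 'cV[R]_n :=
  [set x | forall i, l i 0 <= x i 0 <= u i 0].

Definition indic (R : realType) (T : Type) (A : set T) (x : T) : \bar R :=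
  if `[< A x >] then 0%E else +oo%E.

Definition gfun (R : realType) (p n : nat) (B : 'M[R]_(p, n)) (lam1 lam2 : R)
  (l u : 'cV[R]_n) (x : 'cV[R]_n) : \bar R :=
  ((lam1 * (l0norm (B *m x))%:R + lam2 * (l0norm x)%:R)%:E + indic R (box l u) x)%E.

Definition prox (R : realType) (n : nat) (t : R) (f : 'cV[R]_n -> \bar R)
  (z : 'cV[R]_n) : set 'cV[R]_n :=
  [set x | forall y, ((1 / (2 * t) * sqnorm (x - z))%:E + f x
                      <= (1 / (2 * t) * sqnorm (y - z))%:E + f y)%E].

(* |y|_min = min of |y_i| over supp(y) (= +oo if supp y is empty) *)
Definition absmin (R : realType) (m : nat) (y : 'cV[R]_m) : \bar R :=
  \big[Order.min/+oo%E]_(i < m | y i 0 != 0) (`|y i 0|%:E).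

Definition BI (R : realType) (p n : nat) (B : 'M[R]_(p, n)) : 'M[R]_(p + n, n) :=
  col_mx B 1%:M.

(* Main.v *)
Require Import Defs.
From HB Require Import structures.
From mathcomp Require Import all_boot all_order all_algebra.
From mathcomp Require Import all_classical all_reals all_analysis.
From mathcomp Require Import lra.
Import Order.TTheory GRing.Theory Num.Theory.
Import numFieldNormedType.Exports.
Local Open Scope classical_set_scope.
Local Open Scope ring_scope.



Lemma closed_imp (T : topologicalType) (P : Prop) (A : set T) :
  closed A -> closed [set x | P -> A x].
Proof.
move=> cA; case: (pselect P) => HP.
  have -> : [set x | P -> A x] = A.
    by apply/seteqP; split=> x /=; [exact | move=> ? _].
  by [].
have -> : [set x | P -> A x] = setT.
  by apply/seteqP; split=> x //= _ /HP.
exact: closedT.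
Qed.

Lemma closed_forall (T : topologicalType) (I : Type) (P : I -> set T) :
  (forall i, closed (P i)) -> closed [set x | forall i, P i x].
Proof.
move=> cP.
have -> : [set x | forall i, P i x] = \bigcap_(i in setT) P i.
  by apply/seteqP; split=> x /=; [move=> H i _; exact: H| move=> H i; exact: H].
by apply: closed_bigI => i _; exact: cP.
Qed.

Lemma closed_gef (R : realType) (T : topologicalType) (h : T -> R) (c : R) :
  continuous h -> closed [set x | c <= h x].
Proof.
move=> hc.
have -> : [set x | c <= h x] = h @^-1` [set r | c <= r] by [].
by apply: preimage_closed; [move=> x _; exact: hc | exact: closed_ge].
Qed.

Lemma closed_lef (R : realType) (T : topologicalType) (h : T -> R) (c : R) :
  continuous h -> closed [set x | h x <= c].
Proof.
move=> hc.
have -> : [set x | h x <= c] = h @^-1` [set r | r <= c] by [].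
by apply: preimage_closed; [move=> x _; exact: hc | exact: closed_le].
Qed.

Lemma closed_eqf (R : realType) (T : topologicalType) (h : T -> R) (c : R) :
  continuous h -> closed [set x | h x = c].
Proof.
move=> hc.
have -> : [set x | h x = c] = h @^-1` [set r | r = c] by [].
by apply: preimage_closed; [move=> x _; exact: hc | exact: closed_eq].
Qed.

Lemma cont_sum (R : realType) (T : topologicalType) (I : Type) (s : seq I)
  (F : I -> T -> R) :
  (forall i, continuous (F i)) -> continuous (fun x => \sum_(i <- s) F i x).
Proof.
move=> Fc; elim: s => [|a s IH].
  have -> : (fun x => \sum_(i <- [::]) F i x) = (fun=> 0 : R).
    by apply: funext => x; rewrite big_nil.
  exact: cst_continuous.
have -> : (fun x => \sum_(i <- a :: s) F i x) = F a + (fun x => \sum_(i <- s) F i x).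
  by apply: funext => x; rewrite big_cons.
by move=> x; apply: continuousD; [exact: Fc | exact: IH].
Qed.

Lemma cont_mul (R : realType) (T : topologicalType) (f g : T -> R) :
  continuous f -> continuous g -> continuous (fun x => f x * g x).
Proof. by move=> fc gc x; apply: cvgM; [exact: fc | exact: gc]. Qed.

Lemma cont_sub (R : realType) (T : topologicalType) (f g : T -> R) :
  continuous f -> continuous g -> continuous (fun x => f x - g x).
Proof. by move=> fc gc x; apply: cvgB; [exact: fc | exact: gc]. Qed.


Lemma key_compact (R : realType) p n (B : 'M[R]_(p,n)) (l u : 'cV[R]_n)
  (S : {set 'I_(p+n)}) (k : 'I_(p+n)) (Mx dl : R) :
  0 < dl ->
  exists eta, 0 < eta /\ forall x : 'cV[R]_n,
   box l u x -> (forall j, j \notin S -> (BI B *m x) j 0 = 0) ->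
   (forall i, `|x i 0| <= Mx) ->
   (forall y, box l u y -> (forall j, j \notin S :\ k -> (BI B *m y) j 0 = 0) ->
       dl <= sqnorm (y - x)) ->
   eta <= `|(BI B *m x) k 0|.
Proof.
move=> dl0.
pose W j (v : 'rV[R]_n) := \sum_(i < n) BI B j i * v ord0 i.
have WE : forall v j, (BI B *m v^T) j 0 = W j v.
  move=> v j; rewrite mxE /W; apply: eq_bigr => i _; rewrite [v^T _ _]mxE; reflexivity.
have Wc : forall j, continuous (W j).
  move=> j; rewrite /W; have := (@cont_sum R 'rV[R]_n _ (index_enum 'I_n) (fun i v => BI B j i * v ord0 i)); apply => i.
  apply: cont_mul; [exact: cst_continuous | exact: (@coord_continuous R 1 n ord0 i)].
pose sq (y : 'cV[R]_n) (v : 'rV[R]_n) :=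
  \sum_(i < n) (y i 0 - v ord0 i) * (y i 0 - v ord0 i).
have sqE : forall y v, sqnorm (y - v^T) = sq y v.
  by move=> y v; rewrite /sqnorm /sq; apply: eq_bigr => i _; rewrite !mxE expr2.
have sqc : forall y, continuous (sq y).
  move=> y; rewrite /sq; have := (@cont_sum R 'rV[R]_n _ (index_enum 'I_n) (fun i v => (y i 0 - v ord0 i) * (y i 0 - v ord0 i))); apply => i.
  apply: cont_mul; apply: cont_sub; (exact: cst_continuous || exact: coord_continuous).
pose C : set 'rV[R]_n :=
  [set v : 'rV[R]_n | forall i, l i 0 <= v ord0 i] `&` ([set v : 'rV[R]_n | forall i, v ord0 i <= u i 0] `&`
  ([set v : 'rV[R]_n | forall j, j \notin S -> W j v = 0] `&` ([set v : 'rV[R]_n | forall i, - Mx <= v ord0 i] `&`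
  ([set v : 'rV[R]_n | forall i, v ord0 i <= Mx] `&`
  [set v : 'rV[R]_n | forall y, box l u y -> (forall j, j \notin S :\ k -> (BI B *m y) j 0 = 0) ->
       dl <= sq y v])))).
have cC : closed C.
  apply: closedI; first by apply: closed_forall => i; apply: closed_gef; exact: coord_continuous.
  apply: closedI; first by apply: closed_forall => i; apply: closed_lef; exact: coord_continuous.
  apply: closedI.
    by apply: closed_forall => j; apply: closed_imp; apply: closed_eqf; exact: Wc.
  apply: closedI; first by apply: closed_forall => i; apply: closed_gef; exact: coord_continuous.
  apply: closedI; first by apply: closed_forall => i; apply: closed_lef; exact: coord_continuous.
  apply: closed_forall => y; apply: closed_imp; apply: closed_imp.
  by apply: closed_gef; exact: sqc.
have compC : compact C.
  have K0 := @rV_compact R n (fun=> `[- Mx, Mx]%classic) (fun _ => @segment_compact R (- Mx) Mx).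
  apply: (subclosed_compact cC K0).
  move=> v [_ [_ [_ [H1 [H2 _]]]]] i /=.
  by rewrite in_itv /= H1 H2.
pose f (v : 'rV[R]_n) := `|W k v|.
have fc : continuous f.
  move=> v; apply: continuous_comp; [exact: Wc | exact: norm_continuous].
have compI : compact (f @` C).
  by apply: continuous_compact => //; exact: continuous_subspaceT.
have cI : closed (f @` C) by apply: compact_closed => //; exact: Rhausdorff.
have nI : (~` (f @` C)) 0.
  move=> [v [H1 [H2 [H3 [_ [_ H6]]]]] fv0].
  have Wk0 : W k v = 0 by apply/eqP; rewrite -normr_eq0; apply/eqP.
  have := H6 v^T.
  have Hb : box l u v^T by move=> i; rewrite !mxE H1 H2.
  have Hs : forall j, j \notin S :\ k -> (BI B *m v^T) j 0 = 0.
    move=> j; rewrite in_setD1 negb_and negbK => /orP[/eqP->|jS].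
      by rewrite WE.
    by rewrite WE; exact: H3.
  move=> /(_ Hb Hs); rewrite -sqE subrr.
  have -> : sqnorm (0 : 'cV[R]_n) = 0.
    by rewrite /sqnorm big1 // => i _; rewrite mxE expr0n.
  by rewrite leNgt dl0.
have oI : open (~` (f @` C)) by rewrite openC.
move: oI; rewrite openE => /(_ 0 nI) /nbhs_ballP [e e0 He].
exists e; split => // x H1 H2 H3 H4.
rewrite leNgt; apply/negP => fxe.
have Cx : C x^T.
  split; first by move=> i; rewrite mxE; have := H1 i => /andP[].
  split; first by move=> i; rewrite mxE; have := H1 i => /andP[].
  split; first by move=> j jS; rewrite -WE trmxK; exact: H2.
  split; first by move=> i; rewrite mxE; have := H3 i; rewrite ler_norml => /andP[].
  split; first by move=> i; rewrite mxE; have := H3 i; rewrite ler_norml => /andP[].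
  by move=> y Hy Hs; rewrite -sqE trmxK; exact: H4.
apply: (He (f x^T)); last by exists x^T.
by rewrite -ball_normE /ball_ /= sub0r normrN /f normr_id -WE trmxK.
Qed.

Set Implicit Arguments. Unset Strict Implicit. Unset Printing Implicit Defensive.


Lemma fin_unif (R : realType) (I : finType) (P : I -> R -> Prop) :
  (forall i e e', 0 < e' <= e -> P i e -> P i e') ->
  (forall i, exists e, 0 < e /\ P i e) -> exists e, 0 < e /\ forall i, P i e.
Proof.
move=> mono ex.
suff : forall s : seq I, exists e, 0 < e /\ forall i, i \in s -> P i e.
  move=> /(_ (enum I)) [e [e0 He]]; exists e; split => // i.
  by apply: He; rewrite mem_enum.
elim=> [|a s [e [e0 He]]]; first by exists 1.
have [ea [ea0 Ha]] := ex a.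
exists (Num.min e ea); split; first by rewrite lt_min e0 ea0.
move=> i; rewrite in_cons => /orP[/eqP->|iS].
  by apply: mono Ha; rewrite lt_min e0 ea0 /= ge_min lexx orbT.
by apply: mono (He _ iS); rewrite lt_min e0 ea0 /= ge_min lexx.
Qed.

Definition Gr (R : realType) p n (B : 'M[R]_(p, n)) (lam1 lam2 : R) (x : 'cV[R]_n) : R :=
  lam1 * (l0norm (B *m x))%:R + lam2 * (l0norm x)%:R.

Lemma Gr_ge0 (R : realType) p n (B : 'M[R]_(p, n)) lam1 lam2 x :
  0 <= lam1 -> 0 <= lam2 -> 0 <= Gr B lam1 lam2 x.
Proof. by move=> h1 h2; rewrite /Gr addr_ge0 // mulr_ge0. Qed.

Lemma l0norm0 (R : realType) m : l0norm (0 : 'cV[R]_m) = 0%N.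
Proof.
rewrite /l0norm.
apply: eq_card0 => i; apply/negbTE/negP; by rewrite in_setE /= mxE eqxx.
Qed.

Lemma Gr0 (R : realType) p n (B : 'M[R]_(p, n)) lam1 lam2 :
  Gr B lam1 lam2 0 = 0.
Proof. by rewrite /Gr mulmx0 !l0norm0 !mulr0 addr0. Qed.

Lemma sqnormN (R : realType) n (x : 'cV[R]_n) : sqnorm (- x) = sqnorm x.
Proof. by rewrite /sqnorm; apply: eq_bigr => i _; rewrite mxE sqrrN. Qed.

Lemma sqnorm_ge0 (R : realType) n (x : 'cV[R]_n) : 0 <= sqnorm x.
Proof. by rewrite /sqnorm sumr_ge0 // => i _; rewrite sqr_ge0. Qed.

Lemma sqnorm_entry (R : realType) n (x : 'cV[R]_n) i : (x i 0) ^+ 2 <= sqnorm x.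
Proof.
rewrite /sqnorm (bigD1 i) //= lerDl sumr_ge0 // => j _; exact: sqr_ge0.
Qed.

Lemma prox_facts (R : realType) p n (B : 'M[R]_(p, n)) (lam1 lam2 : R) (l u z x : 'cV[R]_n) (mu : R) :
  0 < mu -> 0 <= lam1 -> 0 <= lam2 -> (forall i, l i 0 <= 0 <= u i 0) ->
  prox mu^-1 (gfun B lam1 lam2 l u) z x ->
  box l u x /\ forall y, box l u y ->
    mu / 2 * sqnorm (x - z) + Gr B lam1 lam2 x <=
    mu / 2 * sqnorm (y - z) + Gr B lam1 lam2 y.
Proof.
move=> mu0 h1 h2 hlu Hp.
have aE : 1 / (2 * mu^-1) = mu / 2.
  by rewrite invfM invrK mul1r mulrC.
have gE : forall y, box l u y -> gfun B lam1 lam2 l u y = (Gr B lam1 lam2 y)%:E.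
  by move=> y hy; rewrite /gfun /Defs.indic asboolT // adde0.
have b0 : box l u 0 by move=> i; rewrite mxE.
have bx : box l u x.
  apply/not_notP => nb.
  have := Hp 0; rewrite /gfun /Defs.indic asboolF // (asboolT b0) adde0.
  have := Gr0 B lam1 lam2; rewrite /Gr => ->.
  by rewrite addey // addey // leye_eq.
split => // y hy.
by have := Hp y; rewrite !gE // aE -!EFinD lee_fin.
Qed.

Lemma wE (R : realType) p n (B : 'M[R]_(p,n)) (v : 'cV[R]_n) :
  BI B *m v = col_mx (B *m v) v.
Proof. by rewrite /BI mul_col_mx mul1mx. Qed.

Lemma arith_drop (R : realType) (lam1 lam2 : R) (a a' b b' : nat) :
  0 < lam1 -> 0 < lam2 ->
  ((a'.+1 <= a)%N /\ (b' <= b)%N) \/ ((a' <= a)%N /\ (b'.+1 <= b)%N) ->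
  lam1 * a'%:R + lam2 * b'%:R + Num.min lam1 lam2 <= lam1 * a%:R + lam2 * b%:R.
Proof.
move=> l1 l2 H.
have m1 : Num.min lam1 lam2 <= lam1 by rewrite ge_min lexx.
have m2 : Num.min lam1 lam2 <= lam2 by rewrite ge_min lexx orbT.
case: H => [[A B]|[A B]].
  move: A B; rewrite -(ler_nat R) -addn1 natrD -(ler_nat R) => A B.
  have X1 := ler_wpM2l (ltW l1) A; have X2 := ler_wpM2l (ltW l2) B.
  rewrite mulrDr mulr1 in X1; lra.
move: A B; rewrite -(ler_nat R) -[(b'.+1)%N]addn1 -(ler_nat R) natrD => A B.
have X1 := ler_wpM2l (ltW l1) A; have X2 := ler_wpM2l (ltW l2) B.
rewrite mulrDr mulr1 in X2; lra.
Qed.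

Lemma l0normE (R : realType) m (y : 'cV[R]_m) :
  l0norm y = #|[pred i | y i 0 != 0]|.
Proof. apply: eq_card => i; rewrite inE; apply/idP/idP => /asboolP // H; exact/asboolP. Qed.

Lemma G_drop (R : realType) p n (B : 'M[R]_(p,n)) (lam1 lam2 : R)
  (x y : 'cV[R]_n) (k : 'I_(p+n)) :
  0 < lam1 -> 0 < lam2 -> (BI B *m x) k 0 != 0 ->
  (forall j, (BI B *m y) j 0 != 0 -> j != k /\ (BI B *m x) j 0 != 0) ->
  Gr B lam1 lam2 y + Num.min lam1 lam2 <= Gr B lam1 lam2 x.
Proof.
move=> l1 l2 xk Hy.
have HB : forall i, (B *m y) i 0 != 0 -> (B *m x) i 0 != 0.
  move=> i; have := Hy (lshift n i); rewrite !wE !col_mxEu => H /H [].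
  by [].
have HX : forall i, y i 0 != 0 -> x i 0 != 0.
  move=> i; have := Hy (rshift p i); rewrite !wE !col_mxEd => H /H [].
  by [].
have subB : [pred i | (B *m y) i 0 != 0] \subset [pred i | (B *m x) i 0 != 0].
  by apply/fintype.subsetP => i; rewrite !inE; exact: HB.
have subX : [pred i | y i 0 != 0] \subset [pred i | x i 0 != 0].
  by apply/fintype.subsetP => i; rewrite !inE; exact: HX.
rewrite /Gr !l0normE; apply: arith_drop => //.
case: (splitP k) => [i0 ki | i0 ki].
  have kE : k = lshift n i0 by apply/val_inj.
  left; split; last exact: subset_leq_card.
  apply: proper_card; apply/properP; split => //; exists i0.
    by rewrite inE /=; move: xk; rewrite kE wE col_mxEu.
  rewrite inE /=; apply/negP => yk.
  have := Hy k; rewrite kE wE col_mxEu => /(_ yk) [].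
  by rewrite eqxx.
have kE : k = rshift p i0 by apply/val_inj.
right; split; first exact: subset_leq_card.
apply: proper_card; apply/properP; split => //; exists i0.
  by rewrite inE /=; move: xk; rewrite kE wE col_mxEd.
rewrite inE /=; apply/negP => yk.
have := Hy k; rewrite kE wE col_mxEd => /(_ yk) [].
by rewrite eqxx.
Qed.

Lemma sq_ineq (R : realType) n (d e : 'cV[R]_n) (t : R) : 0 < t ->
  t * (sqnorm (d + e) - sqnorm e) <= t * (1 + t) * sqnorm d + sqnorm e.
Proof.
move=> t0; rewrite /sqnorm -sumrB !mulr_sumr -big_split /=.
apply: ler_sum => i _; rewrite mxE.
have := sqr_ge0 (t * d i 0 - e i 0); nra.
Qed.

Lemma entry_le_norm (R : realType) n (z : 'cV[R]_n) i : `|z i 0| <= `|z|.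
Proof.
rewrite [X in _ <= X]/Num.Def.normr /= mx_normrE.
by apply/bigmax_geP; right; exists (i, 0).
Qed.

Unset Implicit Arguments. Set Strict Implicit. Set Printing Implicit Defensive.

Theorem lemma3p2 (R : realType) (p n : nat) (B : 'M[R]_(p, n)) (lam1 lam2 : R)
  (l u : 'cV[R]_n) (Xi : set 'cV[R]_n) (mul muu : R) :
  0 < lam1 -> 0 < lam2 ->
  (forall i, l i 0 <= 0 <= u i 0) ->
  compact Xi ->
  0 < mul -> mul < muu ->
  exists nu : R, 0 < nu /\
    (nu%:E <= ereal_inf
       [set absmin (BI B *m x) | x in
          [set x | exists (z : 'cV[R]_n) (mu : R), Xi z /\ (mul <= mu <= muu)%R /\
                     prox mu^-1%R (gfun B lam1 lam2 l u) z x] `\ (0 : 'cV[R]_n)%R])%E.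
Proof.
move=> l1 l2 hlu cXi mul0 mulu.
have [M [_ HM]] := compact_bounded cXi.
set Mz := M + 1.
have zb : forall z, Xi z -> forall i, `|z i 0| <= Mz.
  move=> z Xz i; apply: le_trans (entry_le_norm z i) _.
  by apply: (HM Mz) => //; rewrite /Mz ltrDl ltr01.
set M2 := n%:R * Mz ^+ 2.
have M20 : 0 <= M2 by rewrite mulr_ge0 // sqr_ge0.
have sqz : forall z, Xi z -> sqnorm z <= M2.
  move=> z Xz; rewrite /sqnorm /M2.
  have -> : n%:R * Mz ^+ 2 = \sum_(i < n) Mz ^+ 2.
    by rewrite sumr_const card_ord mulr_natl.
  apply: ler_sum => i _; have := zb z Xz i; rewrite ler_norml => /andP[a b]; nra.
set m := Num.min lam1 lam2.
have m0 : 0 < m by rewrite lt_min l1 l2.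
have muu0 : 0 < muu by apply: lt_trans mulu.
set c := 2 * m / muu.
have c0 : 0 < c by rewrite divr_gt0 // mulr_gt0.
set t := 2 * M2 / c + 1.
have t0 : 0 < t.
  have : 0 <= 2 * M2 / c by apply: divr_ge0; [apply: mulr_ge0 | apply: ltW].
  rewrite /t; lra.
have tc : 2 * M2 <= t * c.
  rewrite /t (mulrDl (2 * M2 / c)) divfK ?gt_eqF // mul1r; lra.
set dl := c / (2 * (1 + t)).
have t20 : 0 < 2 * (1 + t) by rewrite mulr_gt0 //; lra.
have dl0 : 0 < dl by rewrite divr_gt0.
have dlE : dl * (2 * (1 + t)) = c by rewrite /dl divfK // gt_eqF.
set Mx := 1 + M2 + Mz.
have b0 : box l u 0 by move=> i; rewrite mxE; exact: hlu.
have Hx : forall x z mu, Xi z -> (mul <= mu <= muu) ->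
    prox mu^-1 (gfun B lam1 lam2 l u) z x ->
   [/\ box l u x, (forall i, `|x i 0| <= Mx) &
       forall k, (BI B *m x) k 0 != 0 -> forall y, box l u y ->
          (forall j, j \notin [set j | (BI B *m x) j 0 != 0]%SET :\ k ->
             (BI B *m y) j 0 = 0) -> dl <= sqnorm (y - x)].
  move=> x z mu Xz /andP[hm1 hm2] Hp.
  have mu0 : 0 < mu by apply: lt_le_trans hm1.
  have [bx Hopt] := prox_facts mu0 (ltW l1) (ltW l2) hlu Hp.
  have h2 : 0 < mu / 2 by rewrite divr_gt0.
  have Gx : 0 <= Gr B lam1 lam2 x by apply: Gr_ge0; apply: ltW.
  have se : sqnorm (x - z) <= sqnorm z.
    have := Hopt 0 b0; rewrite Gr0 addr0 sub0r sqnormN => H.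
    rewrite -(ler_pM2l h2); lra.
  have se2 : sqnorm (x - z) <= M2 by apply: le_trans se (sqz z Xz).
  split => //.
    move=> i.
    have e1 := sqnorm_entry (x - z) i.
    rewrite !mxE in e1.
    have q : (x i 0 - z i 0) ^+ 2 <= M2 by apply: le_trans e1 se2.
    have : `|x i 0 - z i 0| <= 1 + M2.
      rewrite ler_norml; apply/andP; split; nra.
    have := zb z Xz i.
    have := ler_normD (x i 0 - z i 0) (z i 0); rewrite subrK.
    rewrite /Mx; lra.
  move=> k xk y hy hs.
  have Hy' : forall j, (BI B *m y) j 0 != 0 -> j != k /\ (BI B *m x) j 0 != 0.
    move=> j yj.
    case: (boolP (j \in [set j0 | (BI B *m x) j0 0 != 0]%SET :\ k)) => [|/hs yj0].
      by rewrite in_setD1 inE => /andP[].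
    by rewrite yj0 eqxx in yj.
  have Gd : Gr B lam1 lam2 y + m <= Gr B lam1 lam2 x.
    by apply: (@G_drop _ _ _ B lam1 lam2 x y k).
  have H1 := Hopt y hy.
  set D := sqnorm (y - z) - sqnorm (x - z).
  have hD : m <= mu / 2 * D by rewrite /D mulrBr; lra.
  have D0 : 0 <= D by nra.
  have cD : c <= D.
    have hD' : m * 2 <= mu * D.
      have E : mu / 2 * D = (mu * D) / 2 by rewrite mulrAC.
      by move: hD; rewrite E ler_pdivlMr.
    rewrite /c ler_pdivrMr //.
    nra.
  have := sq_ineq (y - x) (x - z) t0.
  have -> : y - x + (x - z) = y - z by rewrite addrA subrK.
  rewrite -/D => hs2.
  have s1 : t * c <= t * (1 + t) * sqnorm (y - x) + M2.
    have X := ler_wpM2l (ltW t0) cD.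
    lra.
  have s2 : c <= 2 * (1 + t) * sqnorm (y - x).
    rewrite -(ler_pM2l t0); nra.
  rewrite -(ler_pM2r t20) dlE; lra.
pose P (ik : {set 'I_(p+n)} * 'I_(p+n)) (eta : R) :=
  forall x : 'cV[R]_n, box l u x ->
   (forall j, j \notin ik.1 -> (BI B *m x) j 0 = 0) ->
   (forall i, `|x i 0| <= Mx) ->
   (forall y, box l u y -> (forall j, j \notin ik.1 :\ ik.2 -> (BI B *m y) j 0 = 0) ->
       dl <= sqnorm (y - x)) ->
   eta <= `|(BI B *m x) ik.2 0|.
have [nu [nu0 Hnu]] : exists nu, 0 < nu /\ forall ik, P ik nu.
  apply: fin_unif.
    move=> ik e e' /andP[_ e'e] H x a b c' d; exact: le_trans e'e (H x a b c' d).
  by move=> [S k]; rewrite /P /=; exact: (key_compact _ _ _ B l u S k Mx _ dl0).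
exists nu; split => //.
apply: le_ereal_inf_tmp => _ [x [[z [mu [Xz [Hmu Hp]]]] _] <-].
have [bx xb Hk] := Hx x z mu Xz Hmu Hp.
rewrite /absmin; apply: (big_ind (fun a => nu%:E <= a)%E).
- by rewrite leey.
- by move=> a b Ha Hb; rewrite le_min Ha Hb.
- move=> k xk; rewrite lee_fin.
  apply: (Hnu ([set j | (BI B *m x) j 0 != 0]%SET, k)) => //=.
    by move=> j; rewrite inE negbK => /eqP.
  exact: Hk.
Qed.
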